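(* Let $S\colon\{0,1\}^n\to\{0,1\}^n$ be a polynomial-size circuit that is a YES instance of \textsc{Succinct Graph Reachability}, and let $V$, $\mathrm{Enc}$, $\ell=\ell(n)$, $p=p(n)$, $\sigma^{\mathsf{start}}$, $\sigma^{\mathsf{goal}}$ be as described in the context. Then there exists a reconfiguration sequence $\sigma$ from $\sigma^{\mathsf{start}}$ to $\sigma^{\mathsf{goal}}$ over $\{0,1,\bot\}^{2\ell(n)+p(n)}$ such that $V(S)$ accepts every proof in $\sigma$ with probability $1$.
   Context: \textsc{Succinct Graph Reachability}: given a polynomial-size circuit $S\colon\{0,1\}^n\to\{0,1\}^n$ with $S(1^n)=1^n$, decide whether there is a sequence $(\alpha^{(1)},\ldots,\alpha^{(T)})$ in $\{0,1\}^n$ from $0^n$ to $1^n$ such that for all $t<T$: $\alpha^{(t)}=\alpha^{(t+1)}$ or $S(\alpha^{(t)})=\alpha^{(t+1)}$ or $S(\alpha^{(t+1)})=\alpha^{(t)}$; YES instances are those where such a sequence exists. For strings $f,g$ of equal length, $\Delta(f,g)$ is the fraction of positions where they differ; for a set $A$, $\Delta(f,A)=\min_{g\in A}\Delta(f,g)$; $f$ is $\epsilon$-close to $A$ if $\Delta(f,A)\le\epsilon$ and $\epsilon$-far otherwise. $\bot$ is a symbol distinct from $0,1$; $\circ$ denotes concatenation; $f|_I$ denotes the restriction of $f$ to positions $I$. Setting: $\mathrm{Enc}\colon\{0,1\}^n\to\{0,1\}^{\ell(n)}$, $\ell(n)=n^{1+o(1)}$, is an error-correcting code with relative distance $\rho\in(0,1)$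 (i.e. $\Delta(\mathrm{Enc}(\alpha),\mathrm{Enc}(\beta))>\rho$ for $\alpha\ne\beta$), with set of codewords $\mathrm{Enc}(\cdot)$, having a local tester $M$: a probabilistic polynomial-time algorithm making $O(1)$ nonadaptive queries to $f\in\{0,1\}^{\ell(n)}$ that always accepts codewords and rejects every $f$ with probability at least $\kappa\cdot\Delta(f,\mathrm{Enc}(\cdot))$ (for a constant $\kappa>0$); when run on a string over $\{0,1,\bot\}$, $M$ rejects whenever it reads $\bot$. Let $L_{\mathrm{ckt}}(S)=\{\mathrm{Enc}(\alpha)\circ\mathrm{Enc}(\beta) : \alpha=\beta \text{ or } S(\alpha)=\beta \text{ or } S(\beta)=\alpha\}$. Let $V_{\mathrm{ckt}}$ be a smooth PCP-of-proximity verifier for the pair language $\{(S,f\circ g): f\circ g\in L_{\mathrm{ckt}}(S)\}$ with $O(\log n)$ randomness, query complexity $q$, proximity parameter $\rho/4$, soundness error $s_{\mathrm{ckt}}\in(0,1)$, and proof length $p(n)$: on explicit input $S$ it generates a query tuple $I$ into $f\circ g\circ\pi$ and a circuit $D$; if $f\circ g\in L_{\mathrm{ckt}}(S)$ some proof $\pi$ is accepted with probability $1$; if $f\circ g$ is $(\rho/4)$-far from $L_{\mathrm{ckt}}(S)$, every $\pi$ is accepted with probability $<s_{\mathrm{ckt}}$; and every position of $f\circ g\circ\pi$ is queried with the same probability. For $\mathrm{Enc}(\alpha)\circ\mathrm{Enc}(\beta)\in L_{\mathrm{ckt}}(S)$, $\Pi(\alpha,\beta)\in\{0,1\}^{p(n)}$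 is a (polynomial-time computable) proof such that $V_{\mathrm{ckt}}(S)$ accepts $\mathrm{Enc}(\alpha)\circ\mathrm{Enc}(\beta)\circ\Pi(\alpha,\beta)$ with probability $1$. Verifier $V(S)$ with oracle access to $f\circ g\circ\pi\in\{0,1,\bot\}^{\ell(n)}\times\{0,1,\bot\}^{\ell(n)}\times\{0,1,\bot\}^{p(n)}$: (1) run $M$ on $f$ and on $g$; if both runs reject, reject. (2) Pick $i,j\in\{1,\ldots,\ell(n)\}$ independently and uniformly. If $f_i=\bot$ or $g_j=\bot$, accept. (3) Otherwise, run $V_{\mathrm{ckt}}(S)$ to obtain $(I,D)$; if $(f\circ g)|_I$ contains $\bot$, accept; else if $\pi|_I$ contains no $\bot$ and $D((f\circ g\circ\pi)|_I)=1$, accept; otherwise reject. Define $\sigma^{\mathsf{start}}=\mathrm{Enc}(0^n)\circ\mathrm{Enc}(0^n)\circ\Pi(0^n,0^n)$ and $\sigma^{\mathsf{goal}}=\mathrm{Enc}(1^n)\circ\mathrm{Enc}(1^n)\circ\Pi(1^n,1^n)$. A reconfiguration sequence over $\{0,1,\bot\}^N$ from $\sigma^{\mathsf{start}}$ to $\sigma^{\mathsf{goal}}$ is a finite sequence of strings in $\{0,1,\bot\}^N$ starting at $\sigma^{\mathsf{start}}$, ending at $\sigma^{\mathsf{goal}}$, with consecutive strings differing in at most one position. *)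

(* Defs.v *)
From HB Require Import structures.
From mathcomp Require Import all_boot all_order all_algebra.
Set Implicit Arguments. Unset Strict Implicit. Unset Printing Implicit Defensive.
Import Order.TTheory GRing.Theory Num.Theory.
Local Open Scope ring_scope.

Definition bits (n : nat) := {ffun 'I_n -> bool}.
Definition zeros (n : nat) : bits n := [ffun => false].
Definition ones (n : nat) : bits n := [ffun => true].

Definition sgr_step n (S : bits n -> bits n) (a b : bits n) : bool :=
  [|| a == b, S a == b | S b == a].

Definition SGR_yes n (S : bits n -> bits n) : Prop :=
  exists s : seq (bits n), path (sgr_step S) (zeros n) s && (last (zeros n) s == ones n).

(* Positions of f o g o pi: 2l + p positions, f-part, g-part, pi-part. *)
Definition pos (l p : nat) : finType := ('I_l + 'I_l + 'I_p)%type.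
Definition fgpos (l : nat) : finType := ('I_l + 'I_l)%type.

Definition cat2 (T : Type) l (f g : {ffun 'I_l -> T}) : {ffun fgpos l -> T} :=
  [ffun x : fgpos l => match x with inl i => f i | inr j => g j end].

Definition cat3 (T : Type) l p (f g : {ffun 'I_l -> T}) (pi : {ffun 'I_p -> T})
  : {ffun pos l p -> T} :=
  [ffun x : pos l p => match x with
                       | inl (inl i) => f i
                       | inl (inr j) => g j
                       | inr k => pi k end].

Definition is_fg l p (x : pos l p) : bool := if x is inl _ then true else false.
Definition is_pi l p (x : pos l p) : bool := ~~ is_fg x.

(* Strings over {0,1,bot}: None stands for bot. *)
Definition embed (T : finType) (w : {ffun T -> bool}) : {ffun T -> option bool} :=
  [ffun x => Some (w x)].

Definition reldist (R : numFieldType) (T : finType) (f g : {ffun T -> bool}) : R :=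
  #|[set x | f x != g x]|%:R / #|T|%:R.

Definition prob (R : numFieldType) (Om : finType) (E : pred Om) : R :=
  #|[set w | E w]|%:R / #|Om|%:R.

Definition is_code (R : realFieldType) n l (Enc : bits n -> bits l) (rho : R) : Prop :=
  0 < rho < 1 /\ forall a b : bits n, a != b -> rho < reldist R (Enc a) (Enc b).

(* Delta(f, Enc(.)) : minimum over all codewords (all distances are <= 1). *)
Definition dist_code (R : realFieldType) n l (Enc : bits n -> bits l) (f : bits l) : R :=
  \big[Order.min/1]_(a : bits n) reldist R f (Enc a).

Definition M_acc_bin l rM (MQ : bits rM -> seq 'I_l) (MD : bits rM -> seq bool -> bool)
  (f : bits l) (r : bits rM) : bool :=
  MD r (map f (MQ r)).

Definition M_acc l rM (MQ : bits rM -> seq 'I_l) (MD : bits rM -> seq bool -> bool)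
  (f : {ffun 'I_l -> option bool}) (r : bits rM) : bool :=
  all (fun i => f i != None) (MQ r) && MD r (map (fun i => odflt false (f i)) (MQ r)).

Definition is_local_tester (R : realFieldType) n l rM (Enc : bits n -> bits l)
  (kappa : R) (MQ : bits rM -> seq 'I_l) (MD : bits rM -> seq bool -> bool) : Prop :=
  0 < kappa /\
  (forall a : bits n, prob R (M_acc_bin MQ MD (Enc a)) = 1) /\
  (forall f : bits l, kappa * dist_code R Enc f <= prob R (fun r => ~~ M_acc_bin MQ MD f r)).

Definition Vckt_acc l p rV (VI : bits rV -> seq (pos l p)) (VD : bits rV -> seq bool -> bool)
  (w : {ffun pos l p -> bool}) (r : bits rV) : bool :=
  VD r (map w (VI r)).

Definition dist_Lckt (R : realFieldType) n l (S : bits n -> bits n) (Enc : bits n -> bits l)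
  (fg : {ffun fgpos l -> bool}) : R :=
  \big[Order.min/1]_(ab : bits n * bits n | sgr_step S ab.1 ab.2)
     reldist R fg (cat2 (Enc ab.1) (Enc ab.2)).

Definition in_Lckt n l (S : bits n -> bits n) (Enc : bits n -> bits l)
  (fg : {ffun fgpos l -> bool}) : Prop :=
  exists a b : bits n, sgr_step S a b /\ fg = cat2 (Enc a) (Enc b).

Definition is_smooth_pcpp (R : realFieldType) n l p q rV (S : bits n -> bits n)
  (Enc : bits n -> bits l) (rho s_ckt : R)
  (VI : bits rV -> seq (pos l p)) (VD : bits rV -> seq bool -> bool) : Prop :=
  [/\
      forall r, size (VI r) = q,
      0 < s_ckt < 1,
      (forall (f g : bits l), in_Lckt S Enc (cat2 f g) ->
         exists pi : bits p, prob R (Vckt_acc VI VD (cat3 f g pi)) = 1),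
      (forall (f g : bits l) (pi : bits p), rho / 4%:R < dist_Lckt R S Enc (cat2 f g) ->
         prob R (Vckt_acc VI VD (cat3 f g pi)) < s_ckt)
    &
      (forall x y : pos l p,
         prob R (fun r => x \in VI r) = prob R (fun r => y \in VI r))].

Definition is_pcpp_proof (R : realFieldType) n l p rV (S : bits n -> bits n)
  (Enc : bits n -> bits l) (VI : bits rV -> seq (pos l p))
  (VD : bits rV -> seq bool -> bool) (Pi : bits n -> bits n -> bits p) : Prop :=
  forall a b : bits n, sgr_step S a b ->
    prob R (Vckt_acc VI VD (cat3 (Enc a) (Enc b) (Pi a b))) = 1.

Definition V_acc l p rM rV (MQ : bits rM -> seq 'I_l) (MD : bits rM -> seq bool -> bool)
  (VI : bits rV -> seq (pos l p)) (VD : bits rV -> seq bool -> bool)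
  (w : {ffun pos l p -> option bool})
  (om : bits rM * bits rM * ('I_l * 'I_l * bits rV)) : bool :=
  let: (r1, r2, (i, j, r3)) := om in
  let f : {ffun 'I_l -> option bool} := [ffun x => w (inl (inl x))] in
  let g : {ffun 'I_l -> option bool} := [ffun x => w (inl (inr x))] in
  if ~~ M_acc MQ MD f r1 && ~~ M_acc MQ MD g r2 then false
  else if (f i == None) || (g j == None) then true
  else let I := VI r3 in
    if has (fun x => is_fg x && (w x == None)) I then true
    else all (fun x => is_pi x ==> (w x != None)) I
         && VD r3 (map (fun x => odflt false (w x)) I).

Definition V_prob (R : realFieldType) l p rM rV (MQ : bits rM -> seq 'I_l)
  (MD : bits rM -> seq bool -> bool)
  (VI : bits rV -> seq (pos l p)) (VD : bits rV -> seq bool -> bool)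
  (w : {ffun pos l p -> option bool}) : R :=
  prob R (V_acc MQ MD VI VD w).

Definition adj (T : finType) (a b : {ffun T -> option bool}) : bool :=
  (#|[set x | a x != b x]| <= 1)%N.

Definition sigma_start n l p (Enc : bits n -> bits l) (Pi : bits n -> bits n -> bits p)
  : {ffun pos l p -> option bool} :=
  embed (cat3 (Enc (zeros n)) (Enc (zeros n)) (Pi (zeros n) (zeros n))).

Definition sigma_goal n l p (Enc : bits n -> bits l) (Pi : bits n -> bits n -> bits p)
  : {ffun pos l p -> option bool} :=
  embed (cat3 (Enc (ones n)) (Enc (ones n)) (Pi (ones n) (ones n))).

(* Main.v *)
Require Import Defs.
From HB Require Import structures.
From mathcomp Require Import all_boot all_order all_algebra.
Set Implicit Arguments. Unset Strict Implicit. Unset Printing Implicit Defensive.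
Import Order.TTheory GRing.Theory Num.Theory.
Local Open Scope ring_scope.

Definition mixk (T : finType) (w w' : {ffun T -> option bool}) (k : nat)
  : {ffun T -> option bool} :=
  [ffun x => if (enum_rank x < k)%N then w' x else w x].

Lemma mixk0 (T : finType) (w w' : {ffun T -> option bool}) : mixk w w' 0 = w.
Proof. by apply/ffunP => x; rewrite ffunE ltn0. Qed.

Lemma mixkN (T : finType) (w w' : {ffun T -> option bool}) : mixk w w' #|T| = w'.
Proof. by apply/ffunP => x; rewrite ffunE ltn_ord. Qed.

Lemma mixk_adj (T : finType) (w w' : {ffun T -> option bool}) k :
  adj (mixk w w' k) (mixk w w' k.+1).
Proof.
rewrite /adj; apply/card_le1_eqP => x y; rewrite !inE !ffunE.
have rk : forall z, (if (enum_rank z < k)%N then w' z else w z)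
   != (if (enum_rank z < k.+1)%N then w' z else w z) -> (enum_rank z == k :> nat).
  move=> z; case: (ltngtP (enum_rank z) k) => h.
  all: rewrite ?ltnS //.
  - by rewrite (ltnW h) eqxx.
  - by rewrite leqNgt h eqxx.
move=> /rk /eqP hx /rk /eqP hy.
by apply: enum_rank_inj; apply: val_inj; rewrite /= hx hy.
Qed.

Lemma mixk_path (T : finType) (w w' : {ffun T -> option bool}) m k :
  path (fun a b => adj a b) (mixk w w' k) (map (mixk w w') (iota k.+1 m)).
Proof.
elim: m k => [|m IH] k //=.
by rewrite mixk_adj IH.
Qed.

Lemma mixk_last (T : finType) (w w' : {ffun T -> option bool}) m k :
  last (mixk w w' k) (map (mixk w w') (iota k.+1 m)) = mixk w w' (k + m).
Proof.
elim: m k => [|m IH] k /=; first by rewrite addn0.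
by rewrite IH addSnnS.
Qed.

Definition Reach (l p : nat) (G : {ffun pos l p -> option bool} -> Prop)
  (w w' : {ffun pos l p -> option bool}) : Prop :=
  exists s, [/\ path (fun a b => adj a b) w s, last w s = w'
              & forall u, u \in w :: s -> G u].

Lemma Reach_trans l p G (w1 w2 w3 : {ffun pos l p -> option bool}) :
  Reach G w1 w2 -> Reach G w2 w3 -> Reach G w1 w3.
Proof.
move=> [s1 [p1 l1 g1]] [s2 [p2 l2 g2]]; exists (s1 ++ s2); split.
- by rewrite cat_path p1 l1 p2.
- by rewrite last_cat l1.
- move=> u; rewrite -cat_cons mem_cat => /orP [] H; first exact: g1.
  by apply: g2; rewrite inE H orbT.
Qed.

Lemma Reach_seg l p (G : {ffun pos l p -> option bool} -> Prop) (w w' : {ffun pos l p -> option bool}) :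
  (forall u : {ffun pos l p -> option bool},
      (forall x, u x = w x \/ u x = w' x) -> G u) -> Reach G w w'.
Proof.
move=> HG; exists (map (mixk w w') (iota 1 #|pos l p|)); split.
- by have := mixk_path w w' #|pos l p| 0; rewrite mixk0.
- by have := mixk_last w w' #|pos l p| 0; rewrite mixk0 add0n mixkN.
- move=> u; rewrite inE => /orP [/eqP -> | /mapP [k _ ->]].
    by apply: HG => x; left.
  apply: HG => x; rewrite ffunE; case: ifP => _; [right|left] => //.
Qed.

Lemma prob_all (R : realFieldType) (Om : finType) (E : pred Om) (om : Om) :
  (forall w, E w) -> prob R E = 1.
Proof.
move=> HE; rewrite /prob.
have -> : [set w | E w] = setT by apply/setP => w; rewrite !inE HE.
rewrite cardsT divff // pnatr_eq0 -lt0n; apply/card_gt0P; by exists om.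
Qed.

Lemma prob_1 (R : realFieldType) (Om : finType) (E : pred Om) :
  prob R E = 1 -> forall w, E w.
Proof.
move=> H w0; apply/negPn/negP => nE.
have lt : (#|[set w | E w]| < #|Om|)%N.
  rewrite -cardsT; apply: proper_card; rewrite properT.
  apply/negP => /eqP HT.
  have : w0 \in [set w | E w] by rewrite HT inE.
  by rewrite inE (negbTE nE).
have N0 : (#|Om|%:R : R) != 0.
  by rewrite pnatr_eq0 -lt0n; apply/card_gt0P; exists w0.
have : (#|[set w | E w]|%:R : R) = #|Om|%:R.
  by rewrite -[LHS](divfK N0) -/(prob R E) H mul1r.
by move/eqP; rewrite eqr_nat (ltn_eqF lt).
Qed.

Lemma M_acc_code (R : realFieldType) n l rM (Enc : bits n -> bits l) (kappa : R)
  (MQ : bits rM -> seq 'I_l) (MD : bits rM -> seq bool -> bool)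
  (c : bits n) (f : {ffun 'I_l -> option bool}) r :
  is_local_tester Enc kappa MQ MD -> (forall x, f x = Some (Enc c x)) ->
  M_acc MQ MD f r.
Proof.
move=> [_ [H1 _]] Hf; rewrite /M_acc.
have -> : all (fun i => f i != None) (MQ r) by apply/allP => i _; rewrite Hf.
have -> : map (fun i => odflt false (f i)) (MQ r) = map (Enc c) (MQ r).
  by apply: eq_map => i; rewrite Hf.
exact: (prob_1 (H1 c) r).
Qed.

Lemma V_good (R : realFieldType) (n l p rM rV : nat)
  (S : bits n -> bits n) (Enc : bits n -> bits l) (kappa : R)
  (MQ : bits rM -> seq 'I_l) (MD : bits rM -> seq bool -> bool)
  (VI : bits rV -> seq (pos l p)) (VD : bits rV -> seq bool -> bool)
  (Pi : bits n -> bits n -> bits p) (u : {ffun pos l p -> option bool}) :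
  (0 < l)%N -> is_local_tester Enc kappa MQ MD -> is_pcpp_proof R S Enc VI VD Pi ->
  (exists c, (forall x, u (inl (inl x)) = Some (Enc c x))
          \/ (forall x, u (inl (inr x)) = Some (Enc c x))) ->
  [\/ (forall j, u (inl (inr j)) = None), (forall i, u (inl (inl i)) = None)
    | exists a b, sgr_step S a b /\ forall x, (u x = None /\ is_fg x)
        \/ u x = Some (cat3 (Enc a) (Enc b) (Pi a b) x)] ->
  V_prob R MQ MD VI VD u = 1.
Proof.
move=> l0 HM HP [c Hc] HB.
rewrite /V_prob; apply: (@prob_all R _ (V_acc MQ MD VI VD u) (zeros rM, zeros rM, (Ordinal l0, Ordinal l0, zeros rV))).

move=> [[r1 r2] [[i j] r3]] /=.
have H1 : M_acc MQ MD [ffun x => u (inl (inl x))] r1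
          || M_acc MQ MD [ffun x => u (inl (inr x))] r2.
  by case: Hc => Hc; apply/orP; [left|right];
    apply: (@M_acc_code R n l rM Enc kappa MQ MD c _ _ HM) => x; rewrite ffunE.
case: ifP => [/andP [/negbTE A /negbTE B] | _]; first by move: H1; rewrite A B.
case: ifP => // Hfg.
case: HB => [Hg | Hf | [a [b [Hab Hu]]]].
- by move: Hfg; rewrite !ffunE Hg eqxx orbT.
- by move: Hfg; rewrite !ffunE Hf eqxx.
- case: ifP => // /negbT /hasPn Hn.
  have Hs : forall x, x \in VI r3 -> u x = Some (cat3 (Enc a) (Enc b) (Pi a b) x).
    move=> x xI; case: (Hu x) => // [[Hx Hfgx]]; move: (Hn x xI).
    by rewrite Hfgx Hx eqxx.
  apply/andP; split.
    apply/(@allP (pos l p)) => x xI. by rewrite (Hs x xI) implybT.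
  have -> : map (fun x => odflt false (u x)) (VI r3)
            = map (cat3 (Enc a) (Enc b) (Pi a b)) (VI r3).
    by apply/eq_in_map => x xI; rewrite Hs.
  exact: (prob_1 (HP a b Hab) r3).
Qed.

Lemma embed_cat3 l p (f g : bits l) (pi : bits p) :
  embed (cat3 f g pi) = cat3 (embed f) (embed g) (embed pi).
Proof. by apply/ffunP => [[[i|j]|k]]; rewrite !ffunE. Qed.

Theorem mainTheorem3 (R : realFieldType) (n l p q rM rV : nat)
  (S : bits n -> bits n) (Enc : bits n -> bits l) (rho kappa s_ckt : R)
  (MQ : bits rM -> seq 'I_l) (MD : bits rM -> seq bool -> bool)
  (VI : bits rV -> seq (pos l p)) (VD : bits rV -> seq bool -> bool)
  (Pi : bits n -> bits n -> bits p) :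
  (0 < n)%N ->
  S (ones n) = ones n ->
  SGR_yes S ->
  is_code Enc rho ->
  is_local_tester Enc kappa MQ MD ->
  is_smooth_pcpp q S Enc rho s_ckt VI VD ->
  is_pcpp_proof R S Enc VI VD Pi ->
  exists sigma : seq {ffun pos l p -> option bool},
    [/\ path (fun a b => adj a b) (sigma_start Enc Pi) sigma,
        last (sigma_start Enc Pi) sigma = sigma_goal Enc Pi
      & forall w, w \in sigma_start Enc Pi :: sigma -> V_prob R MQ MD VI VD w = 1].
Proof.
move=> n0 _ [s /andP [Hp /eqP Hl]] [/andP [rho0 _] Hcode] HM _ HP.
have l0 : (0 < l)%N.
  rewrite lt0n; apply/negP => /eqP l0.
  have neq : zeros n != ones n.
    by apply/eqP => /ffunP /(_ (Ordinal n0)); rewrite !ffunE.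
  have := Hcode _ _ neq; rewrite /reldist card_ord.
  have -> : (l%:R : R) = 0 by rewrite l0.
  rewrite invr0 mulr0.
  by rewrite ltNge (ltW rho0).
pose G := fun u : {ffun pos l p -> option bool} => V_prob R MQ MD VI VD u = 1.
pose eo := fun a : bits n => embed (Enc a).
pose bot := [ffun => None] : {ffun 'I_l -> option bool}.
pose ep := fun a b : bits n => embed (Pi a b).
pose st := fun a => cat3 (eo a) (eo a) (ep a a).
have good := fun u => @V_good R n l p rM rV S Enc kappa MQ MD VI VD Pi u l0 HM HP.
have refl : forall a, sgr_step S a a by move=> a; rewrite /sgr_step eqxx.
have step : forall a b, sgr_step S a b -> Reach G (st a) (st b).
  move=> a b Hab.
  apply: (@Reach_trans _ _ _ _ (cat3 (eo a) bot (ep a a))).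
    apply: Reach_seg => u Hu; apply: good.
      by exists a; left => i; case: (Hu (inl (inl i))) => ->; rewrite !ffunE.
    apply: Or33; exists a, a; split => // x.
    by case: (Hu x) => ->; case: x => [[i|j]|k]; rewrite !ffunE /=; by [left|right].
  apply: (@Reach_trans _ _ _ _ (cat3 (eo a) bot (ep a b))).
    apply: Reach_seg => u Hu; apply: good.
      by exists a; left => i; case: (Hu (inl (inl i))) => ->; rewrite !ffunE.
    by apply: Or31 => j; case: (Hu (inl (inr j))) => ->; rewrite !ffunE.
  apply: (@Reach_trans _ _ _ _ (cat3 (eo a) (eo b) (ep a b))).
    apply: Reach_seg => u Hu; apply: good.
      by exists a; left => i; case: (Hu (inl (inl i))) => ->; rewrite !ffunE.
    apply: Or33; exists a, b; split => // x.
    by case: (Hu x) => ->; case: x => [[i|j]|k]; rewrite !ffunE /=; by [left|right].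
  apply: (@Reach_trans _ _ _ _ (cat3 bot (eo b) (ep a b))).
    apply: Reach_seg => u Hu; apply: good.
      by exists b; right => i; case: (Hu (inl (inr i))) => ->; rewrite !ffunE.
    apply: Or33; exists a, b; split => // x.
    by case: (Hu x) => ->; case: x => [[i|j]|k]; rewrite !ffunE /=; by [left|right].
  apply: (@Reach_trans _ _ _ _ (cat3 bot (eo b) (ep b b))).
    apply: Reach_seg => u Hu; apply: good.
      by exists b; right => i; case: (Hu (inl (inr i))) => ->; rewrite !ffunE.
    by apply: Or32 => j; case: (Hu (inl (inl j))) => ->; rewrite !ffunE.
  apply: Reach_seg => u Hu; apply: good.
    by exists b; right => i; case: (Hu (inl (inr i))) => ->; rewrite !ffunE.
  apply: Or33; exists b, b; split => // x.
  by case: (Hu x) => ->; case: x => [[i|j]|k]; rewrite !ffunE /=; by [left|right].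
have all_reach : forall a s, path (sgr_step S) a s -> Reach G (st a) (st (last a s)).
  move=> a0 s0; elim: s0 a0 => [|b s0 IH] a /=.
    move=> _; apply: Reach_seg => u Hu; apply: good.
      by exists a; left => i; case: (Hu (inl (inl i))) => ->; rewrite !ffunE.
    apply: Or33; exists a, a; split => // x.
    by case: (Hu x) => ->; case: x => [[i|j]|k]; rewrite !ffunE /=; by [left|right].
  by move/andP => [h hp]; apply: Reach_trans (step _ _ h) (IH _ hp).
have := all_reach _ _ Hp; rewrite Hl.
have -> : st (zeros n) = sigma_start Enc Pi by rewrite /sigma_start embed_cat3.
have -> : st (ones n) = sigma_goal Enc Pi by rewrite /sigma_goal embed_cat3.
by move=> [sig [h1 h2 h3]]; exists sig; split.
Qed.
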